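(* Let $\mathcal{A}=\langle L,\mathcal{X},E\rangle$ be a timed automaton, $\ell_0,\ell\in L$, $\nu\in\mathbb{R}_{\ge0}^{\mathcal{X}}$ and $\gamma\subseteq\mathcal{X}$. Then $\mathcal{A}$ has a run from $\langle\ell_0,\mathbf{0}\rangle$ to $\langle\ell,\nu\rangle$ along which the set of clocks reset (i.e. the union of the reset sets $\lambda$ of the discrete transitions taken) is exactly $\gamma$ if and only if $R(\mathcal{A})$ has a run from the state $\langle\ell_0,\mathbf{0},\{\mathbf{0}\},\gamma\rangle$ to some state $\langle\ell,\upsilon,Z,\emptyset\rangle$ with $\upsilon\in\mathbb{N}^{\mathcal{X}}$ and $Z\in\mathcal{Z}_1(\mathcal{X})$ such that $\nu-\upsilon\in Z$.
   Context: Let $\mathcal{X}$ be a finite set of clocks. Clock constraints $\Phi(\mathcal{X})$ are generated by $\varphi ::= \mathbf{true}\mid x<k\mid x=k\mid x>k\mid \varphi\wedge\varphi$ with $k\in\mathbb{N}$, $x\in\mathcal{X}$. A clock valuation is a map $\nu:\mathcal{X}\to\mathbb{R}_{\ge0}$ (the same operations are used for maps $\mathcal{X}\to\mathbb{R}$); $\nu\models\varphi$ denotes satisfaction; $\mathbf{0}$ is the all-zero valuation; $(\nu+t)(x)=\nu(x)+t$ for $t\ge0$; for $\lambda\subseteq\mathcal{X}$, $\nu[\lambda\leftarrow0]$ sets clocks in $\lambda$ to $0$ and leaves others unchanged. A timed automaton is $\mathcal{A}=\langle L,\mathcal{X},E\rangle$ with finite location set $L$, finite clock set $\mathcal{X}$,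 and edges $E\subseteq L\times\Phi(\mathcal{X})\times2^{\mathcal{X}}\times L$. A configuration is a pair $\langle\ell,\nu\rangle$. Transitions: delay $\langle\ell,\nu\rangle\xrightarrow{d}\langle\ell,\nu+d\rangle$ for $d\ge0$; discrete $\langle\ell,\nu\rangle\xrightarrow{0}\langle\ell',\nu[\lambda\leftarrow0]\rangle$ whenever $\langle\ell,\varphi,\lambda,\ell'\rangle\in E$ and $\nu\models\varphi$. A run is a finite (possibly empty) sequence of consecutive transitions. A 1-bounded zone is a subset of $[0,1]^{\mathcal{X}}$ defined by a finite conjunction of constraints $x_i\bowtie c$ and $x_i-x_j\bowtie c$ with $c\in\{-1,0,1\}$ and $\bowtie\in\{<,\le,=,\ge,>\}$; $\mathcal{Z}_1(\mathcal{X})$ is the (finite) set of 1-bounded zones. For a set $Z$ of valuations, $Z[\lambda\leftarrow0]=\{\nu[\lambda\leftarrow0]:\nu\in Z\}$ and $\overrightarrow{Z}=\{\nu+t:\nu\in Z,t\ge0\}\cap[0,1]^{\mathcal{X}}$; $[\![x=1]\!]$ is the set of valuations with $x=1$; for $\upsilon\in\mathbb{N}^{\mathcal{X}}$, $\upsilon[x\leftarrow x+1]$ increments coordinate $x$ by one. The automaton $R(\mathcal{A})$ is the (infinite-state, nondeterministic, with $\varepsilon$-transitions) automaton over alphabet $\mathcal{X}$ with states $Q=L\times\mathbb{N}^{\mathcal{X}}\times\mathcal{Z}_1(\mathcal{X})\times2^{\mathcal{X}}$ and transitions: (1) delay: $\langle\ell,\upsilon,Z,\gamma\rangle\xrightarrow{\varepsilon}\langle\ell,\upsilon,\overrightarrow{Z},\gamma\rangle$;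 (2) wrapping, for each $x\in\mathcal{X}$: $\langle\ell,\upsilon,Z,\gamma\rangle\xrightarrow{\sigma}\langle\ell,\upsilon[x\leftarrow x+1],(Z\cap[\![x=1]\!])[x\leftarrow0],\gamma\rangle$, where $\sigma=\varepsilon$ if $x\in\gamma$ and $\sigma=x$ otherwise; (3) for each edge $\langle\ell,\varphi,\lambda,\ell'\rangle\in E$ and each $\gamma'$ with $\gamma'\cup\lambda=\gamma$: $\langle\ell,\upsilon,Z,\gamma\rangle\xrightarrow{\varepsilon}\langle\ell',\upsilon[\lambda\leftarrow0],\{\nu\in Z:\upsilon+\nu\models\varphi\}[\lambda\leftarrow0],\gamma'\rangle$. A run of $R(\mathcal{A})$ on word $w\in\mathcal{X}^*$ is a finite sequence of consecutive transitions whose concatenated labels equal $w$. *)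

(* Defs.v *)
From Stdlib Require Import Bool Reals List Classical ClassicalEpsilon.
Open Scope bool_scope.
Import ListNotations.
Open Scope R_scope.
Set Implicit Arguments.

Definition finite_type (T : Type) : Prop := exists l : list T, forall x : T, In x l.

Inductive guard (X : Type) : Type :=
| GTrue : guard X
| GLt : X -> nat -> guard X
| GEq : X -> nat -> guard X
| GGt : X -> nat -> guard X
| GAnd : guard X -> guard X -> guard X.
Arguments GTrue {X}.

Fixpoint gsat {X : Type} (v : X -> R) (g : guard X) : Prop :=
  match g with
  | GTrue => True
  | GLt x k => v x < INR k
  | GEq x k => v x = INR k
  | GGt x k => v x > INR k
  | GAnd g1 g2 => gsat v g1 /\ gsat v g2
  end.

Definition clockset (X : Type) := X -> bool.

(** Timed automaton <L, X, E>: L and X are the carrier types (finiteness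
    is assumed separately), E is a finite list of edges (l, phi, lambda, l'). *)
Record TA (L X : Type) := mkTA { edges : list (L * guard X * clockset X * L) }.

Definition val0 {X : Type} : X -> R := fun _ => 0.
Definition vdelay {X : Type} (v : X -> R) (t : R) : X -> R := fun x => v x + t.
Definition vreset {X : Type} (v : X -> R) (lam : clockset X) : X -> R :=
  fun x => if lam x then 0 else v x.

Inductive ta_step {L X : Type} (A : TA L X) :
    (L * (X -> R)) -> option (clockset X) -> (L * (X -> R)) -> Prop :=
| ta_delay : forall l v d, 0 <= d -> ta_step A (l, v) None (l, vdelay v d)
| ta_discrete : forall l phi lam l' v,
    In (l, phi, lam, l') (edges A) -> gsat v phi ->
    ta_step A (l, v) (Some lam) (l', vreset v lam).

(** Runs (finite, possibly empty), indexed by the union of the reset sets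
    of the discrete transitions taken. *)
Inductive ta_run {L X : Type} (A : TA L X) :
    (L * (X -> R)) -> (L * (X -> R)) -> clockset X -> Prop :=
| ta_run_nil : forall c, ta_run A c c (fun _ => false)
| ta_run_cons : forall c1 c2 c3 lab rs,
    ta_step A c1 lab c2 -> ta_run A c2 c3 rs ->
    ta_run A c1 c3 (fun x => match lab with
                             | None => rs x
                             | Some lam => lam x || rs x end).

Inductive cmp := CLt | CLe | CEq | CGe | CGt.
Inductive cst := Cm1 | C0 | C1.
Definition cst_val (c : cst) : R := match c with Cm1 => -1 | C0 => 0 | C1 => 1 end.
Definition cmp_sat (o : cmp) (a b : R) : Prop :=
  match o with CLt => a < b | CLe => a <= b | CEq => a = b | CGe => a >= b | CGt => a > b end.

Inductive zconstr (X : Type) : Type :=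
| ZBound : X -> cmp -> cst -> zconstr X
| ZDiff : X -> X -> cmp -> cst -> zconstr X.

Definition zsat {X : Type} (v : X -> R) (k : zconstr X) : Prop :=
  match k with
  | ZBound x o c => cmp_sat o (v x) (cst_val c)
  | ZDiff x y o c => cmp_sat o (v x - v y) (cst_val c)
  end.

Definition in_unit_cube {X : Type} (v : X -> R) : Prop := forall x, 0 <= v x <= 1.

Definition zone1 {X : Type} (Z : (X -> R) -> Prop) : Prop :=
  exists cs : list (zconstr X),
    forall v, Z v <-> (in_unit_cube v /\ Forall (zsat v) cs).

Definition zreset {X : Type} (Z : (X -> R) -> Prop) (lam : clockset X) : (X -> R) -> Prop :=
  fun v => exists v0, Z v0 /\ v = vreset v0 lam.
Definition zfuture {X : Type} (Z : (X -> R) -> Prop) : (X -> R) -> Prop :=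
  fun v => (exists v0 t, Z v0 /\ 0 <= t /\ v = vdelay v0 t) /\ in_unit_cube v.

Definition single {X : Type} (x : X) : clockset X :=
  fun y => if excluded_middle_informative (y = x) then true else false.
Definition incr {X : Type} (u : X -> nat) (x : X) : X -> nat :=
  fun y => if excluded_middle_informative (y = x) then S (u y) else u y.
Definition nreset {X : Type} (u : X -> nat) (lam : clockset X) : X -> nat :=
  fun y => if lam y then 0%nat else u y.
Definition vplus {X : Type} (u : X -> nat) (v : X -> R) : X -> R :=
  fun x => INR (u x) + v x.

Record rstate (L X : Type) := mkR {
  rloc : L; rint : X -> nat; rzone : (X -> R) -> Prop; rgam : clockset X }.
Arguments mkR {L X}.

(** Transitions of R(A); the label None is epsilon.  Target states must lie
    in Q = L x N^X x Z_1(X) x 2^X. *)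
Inductive rstep {L X : Type} (A : TA L X) : rstate L X -> option X -> rstate L X -> Prop :=
| r_delay : forall l u Z g,
    zone1 (zfuture Z) ->
    rstep A (mkR l u Z g) None (mkR l u (zfuture Z) g)
| r_wrap : forall l u Z g x,
    zone1 (zreset (fun v => Z v /\ v x = 1) (single x)) ->
    rstep A (mkR l u Z g) (if g x then None else Some x)
          (mkR l (incr u x) (zreset (fun v => Z v /\ v x = 1) (single x)) g)
| r_edge : forall l u Z g phi lam l' g',
    In (l, phi, lam, l') (edges A) ->
    (forall x, g x = g' x || lam x) ->
    zone1 (zreset (fun v => Z v /\ gsat (vplus u v) phi) lam) ->
    rstep A (mkR l u Z g) None
          (mkR l' (nreset u lam) (zreset (fun v => Z v /\ gsat (vplus u v) phi) lam) g').

Inductive rrun {L X : Type} (A : TA L X) : rstate L X -> list X -> rstate L X -> Prop :=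
| rrun_nil : forall q, rrun A q [] q
| rrun_cons : forall q1 a q2 w q3,
    rstep A q1 a q2 -> rrun A q2 w q3 ->
    rrun A q1 (match a with None => w | Some x => x :: w end) q3.

(* Main.v *)
From Pilot Require Import Defs.
From Stdlib Require Import Reals List Lra Lia ZArith Bool FunctionalExtensionality Classical ClassicalEpsilon.
Import ListNotations.
Open Scope R_scope.


Definition eqc {N : Type} (a b : N) : bool :=
  if excluded_middle_informative (a = b) then true else false.
Lemma eqc_eq {N} (a b : N) : a = b -> eqc a b = true.
Proof. intros; unfold eqc; destruct excluded_middle_informative; congruence. Qed.
Lemma eqc_neq {N} (a b : N) : a <> b -> eqc a b = false.
Proof. intros; unfold eqc; destruct excluded_middle_informative; congruence. Qed.

Definition atom (N : Type) := (N * N * bool * Z)%type.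
Definition asat {N} (f : N -> R) (k : atom N) : Prop :=
  match k with (a, b, s, c) => if s then f a - f b < IZR c else f a - f b <= IZR c end.
Definition upd {N} (f : N -> R) (z : N) (r : R) : N -> R :=
  fun n => if excluded_middle_informative (n = z) then r else f n.

Definition isUp {N} (z : N) (k : atom N) : bool :=
  match k with (a,b,_,_) => eqc a z && negb (eqc b z) end.
Definition isLo {N} (z : N) (k : atom N) : bool :=
  match k with (a,b,_,_) => negb (eqc a z) && eqc b z end.
Definition isInd {N} (z : N) (k : atom N) : bool :=
  match k with (a,b,_,_) => Bool.eqb (eqc a z) (eqc b z) end.
Definition comb {N} (up lo : atom N) : atom N :=
  match up, lo with (_, b, s1, c1), (a, _, s2, c2) => (a, b, s1 || s2, (c1 + c2)%Z) end.
Definition elim {N} (z : N) (cs : list (atom N)) : list (atom N) :=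
  filter (isInd z) cs ++
  flat_map (fun lo => map (fun up => comb up lo) (filter (isUp z) cs)) (filter (isLo z) cs).

Definition lok (l : R * bool) (r : R) : Prop := if snd l then fst l < r else fst l <= r.
Definition uok (u : R * bool) (r : R) : Prop := if snd u then r < fst u else r <= fst u.

Lemma dom_lo : forall ls l0, exists m, In m (l0 :: ls) /\
  forall r, lok m r -> forall l, In l (l0 :: ls) -> lok l r.
Proof.
  induction ls as [|l1 ls IH]; intros l0.
  - exists l0; split; [left; auto|]. intros r H l [<-|[]]; auto.
  - destruct (IH l1) as [m [Hm Hd]].
    destruct l0 as [x0 s0], m as [x1 s1].
    destruct (total_order_T x0 x1) as [[Hlt|Heq]|Hgt].
    + exists (x1, s1); split; [right; auto|].
      intros r Hr l [<-|Hl]; [|apply Hd; auto].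
      unfold lok in *; simpl in *; destruct s0, s1; lra.
    + destruct s0.
      * exists (x0, true); split; [left; auto|].
        intros r Hr l [<-|Hl]; auto. apply Hd; auto.
        unfold lok in *; simpl in *; destruct s1; lra.
      * exists (x1, s1); split; [right; auto|].
        intros r Hr l [<-|Hl]; [|apply Hd; auto].
        unfold lok in *; simpl in *; destruct s1; lra.
    + exists (x0, s0); split; [left; auto|].
      intros r Hr l [<-|Hl]; auto. apply Hd; auto.
      unfold lok in *; simpl in *; destruct s0, s1; lra.
Qed.

Lemma dom_up : forall ls l0, exists m, In m (l0 :: ls) /\
  forall r, uok m r -> forall l, In l (l0 :: ls) -> uok l r.
Proof.
  induction ls as [|l1 ls IH]; intros l0.
  - exists l0; split; [left; auto|]. intros r H l [<-|[]]; auto.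
  - destruct (IH l1) as [m [Hm Hd]].
    destruct l0 as [x0 s0], m as [x1 s1].
    destruct (total_order_T x0 x1) as [[Hlt|Heq]|Hgt].
    + exists (x0, s0); split; [left; auto|].
      intros r Hr l [<-|Hl]; auto. apply Hd; auto.
      unfold uok in *; simpl in *; destruct s0, s1; lra.
    + destruct s0.
      * exists (x0, true); split; [left; auto|].
        intros r Hr l [<-|Hl]; auto. apply Hd; auto.
        unfold uok in *; simpl in *; destruct s1; lra.
      * exists (x1, s1); split; [right; auto|].
        intros r Hr l [<-|Hl]; [|apply Hd; auto].
        unfold uok in *; simpl in *; destruct s1; lra.
    + exists (x1, s1); split; [right; auto|].
      intros r Hr l [<-|Hl]; [|apply Hd; auto].
      unfold uok in *; simpl in *; destruct s0, s1; lra.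
Qed.

Lemma interval : forall lows ups,
  (forall l u, In l lows -> In u ups ->
     if snd l || snd u then fst l < fst u else fst l <= fst u) ->
  exists r, (forall l, In l lows -> lok l r) /\ (forall u, In u ups -> uok u r).
Proof.
  intros lows ups H.
  destruct lows as [|l0 ls], ups as [|u0 us].
  - exists 0; split; intros ? [].
  - destruct (dom_up us u0) as [m [_ Hm]].
    exists (fst m - 1); split; [intros ? []|].
    apply Hm. unfold uok; destruct (snd m); lra.
  - destruct (dom_lo ls l0) as [m [_ Hm]].
    exists (fst m + 1); split; [|intros ? []].
    apply Hm. unfold lok; destruct (snd m); lra.
  - destruct (dom_up us u0) as [mu [Hmu Hu]].
    destruct (dom_lo ls l0) as [ml [Hml Hl]].
    specialize (H ml mu Hml Hmu).
    destruct ml as [xl sl], mu as [xu su]; simpl in H.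
    destruct (sl || su) eqn:E.
    + exists ((xl + xu) / 2); split; [apply Hl|apply Hu];
        unfold lok, uok; simpl; destruct sl, su; lra.
    + apply orb_false_iff in E; destruct E; subst.
      exists xl; split; [apply Hl|apply Hu]; unfold lok, uok; simpl; lra.
Qed.

Lemma ind_transfer {N} (z : N) (f : N -> R) r k :
  isInd z k = true -> (asat (upd f z r) k <-> asat f k).
Proof.
  destruct k as [[[a b] s] c]; simpl; unfold upd.
  destruct (excluded_middle_informative (a = z)), (excluded_middle_informative (b = z));
    try rewrite (eqc_eq _ _ e); try rewrite (eqc_eq _ _ e0);
    try rewrite (eqc_neq _ _ n); try rewrite (eqc_neq _ _ n0); simpl; intros H;
    try discriminate.
  - subst. replace (r - r) with (f z - f z) by ring. tauto.
  - tauto.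
Qed.

Lemma FM {N} (z : N) (cs : list (atom N)) (f : N -> R) :
  (exists r, Forall (asat (upd f z r)) cs) <-> Forall (asat f) (elim z cs).
Proof.
  split.
  - intros [r Hr]. rewrite Forall_forall in Hr |- *. unfold elim.
    intros k Hk. apply in_app_iff in Hk as [Hk|Hk].
    + apply filter_In in Hk as [Hk Hi]. apply (ind_transfer z f r k Hi). auto.
    + apply in_flat_map in Hk as [lo [Hlo Hk]]. apply in_map_iff in Hk as [up [<- Hup]].
      apply filter_In in Hlo as [Hlo Hlo'], Hup as [Hup Hup'].
      pose proof (Hr _ Hlo) as A1. pose proof (Hr _ Hup) as A2.
      destruct lo as [[[a1 b1] s1] c1], up as [[[a2 b2] s2] c2]; simpl in *.
      unfold upd in *.
      destruct (excluded_middle_informative (a1 = z)) as [e|n]; [rewrite (eqc_eq _ _ e) in Hlo'; discriminate|].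
      destruct (excluded_middle_informative (b1 = z)) as [e1|n1]; [|rewrite (eqc_neq _ _ n1) in Hlo'; rewrite andb_false_r in Hlo'; discriminate].
      destruct (excluded_middle_informative (a2 = z)) as [e2|n2]; [|rewrite (eqc_neq _ _ n2) in Hup'; discriminate].
      destruct (excluded_middle_informative (b2 = z)) as [e3|n3]; [rewrite (eqc_eq _ _ e3) in Hup'; rewrite andb_false_r in Hup'; discriminate|].
      rewrite plus_IZR. destruct s1, s2; simpl; lra.
  - intros H. rewrite Forall_forall in H. unfold elim in H.
    set (lows := map (fun k : atom N => match k with (a,_,s,c) => (f a - IZR c, s) end) (filter (isLo z) cs)).
    set (ups := map (fun k : atom N => match k with (_,b,s,c) => (f b + IZR c, s) end) (filter (isUp z) cs)).
    destruct (interval lows ups) as [r [Hl Hu]].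
    { intros lw up Hlw Hup. unfold lows, ups in *.
      apply in_map_iff in Hlw as [lo [<- Hlo]]. apply in_map_iff in Hup as [upk [<- Hupk]].
      assert (Hc : asat f (comb upk lo)).
      { apply H. apply in_app_iff; right. apply in_flat_map. exists lo; split; auto.
        apply in_map_iff; exists upk; split; auto. }
      destruct lo as [[[a1 b1] s1] c1], upk as [[[a2 b2] s2] c2]; simpl in *.
      rewrite plus_IZR in Hc. destruct s1, s2; simpl in *; lra. }
    exists r. rewrite Forall_forall. intros k Hk.
    destruct k as [[[a b] s] c] eqn:Ek.
    destruct (excluded_middle_informative (a = z)) as [e|n], (excluded_middle_informative (b = z)) as [e1|n1].
    + apply (ind_transfer z f r). simpl; rewrite (eqc_eq _ _ e), (eqc_eq _ _ e1); auto.
      apply H, in_app_iff; left; apply filter_In; split; auto.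
      simpl; rewrite (eqc_eq _ _ e), (eqc_eq _ _ e1); auto.
    + assert (Hin : In (f b + IZR c, s) ups).
      { unfold ups. apply in_map_iff. exists (a,b,s,c); split; auto.
        apply filter_In; split; auto. simpl; rewrite (eqc_eq _ _ e), (eqc_neq _ _ n1); auto. }
      specialize (Hu _ Hin). unfold uok in Hu; simpl in *. unfold upd.
      destruct (excluded_middle_informative (a = z)); [|congruence].
      destruct (excluded_middle_informative (b = z)); [congruence|].
      destruct s; lra.
    + assert (Hin : In (f a - IZR c, s) lows).
      { unfold lows. apply in_map_iff. exists (a,b,s,c); split; auto.
        apply filter_In; split; auto. simpl; rewrite (eqc_neq _ _ n), (eqc_eq _ _ e1); auto. }
      specialize (Hl _ Hin). unfold lok in Hl; simpl in *. unfold upd.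
      destruct (excluded_middle_informative (a = z)); [congruence|].
      destruct (excluded_middle_informative (b = z)); [|congruence].
      destruct s; lra.
    + apply (ind_transfer z f r). simpl; rewrite (eqc_neq _ _ n), (eqc_neq _ _ n1); auto.
      apply H, in_app_iff; left; apply filter_In; split; auto.
      simpl; rewrite (eqc_neq _ _ n), (eqc_neq _ _ n1); auto.
Qed.


Section Zones.
Variable X : Type.
Variable lx : list X.
Hypothesis Hlx : forall x : X, In x lx.

Definition ext (v : X -> R) : option X -> R :=
  fun o => match o with None => 0 | Some x => v x end.
Definition Def (Z : (X -> R) -> Prop) : Prop :=
  exists cs : list (atom (option X)), forall v, Z v <-> Forall (asat (ext v)) cs.

Lemma Def_iff Z Z' : Def Z -> (forall v, Z' v <-> Z v) -> Def Z'.
Proof. intros [cs H] H'; exists cs; intros v; rewrite H'; auto. Qed.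

Lemma Def_and Z1 Z2 : Def Z1 -> Def Z2 -> Def (fun v => Z1 v /\ Z2 v).
Proof.
  intros [c1 H1] [c2 H2]; exists (c1 ++ c2); intros v.
  rewrite Forall_app, H1, H2; tauto.
Qed.

Lemma Def_all (P : X -> (X -> R) -> Prop) (ks : X -> list (atom (option X))) :
  (forall x v, P x v <-> Forall (asat (ext v)) (ks x)) ->
  Def (fun v => forall x, P x v).
Proof.
  intros H; exists (flat_map ks lx); intros v; split.
  - intros Hv. apply Forall_forall; intros k Hk.
    apply in_flat_map in Hk as [x [_ Hk]].
    specialize (Hv x). apply H in Hv. rewrite Forall_forall in Hv; auto.
  - intros Hv x. apply H. rewrite Forall_forall in Hv |- *. intros k Hk.
    apply Hv, in_flat_map; eauto.
Qed.

Lemma Def_cube : Def in_unit_cube.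
Proof.
  apply (Def_all (fun x v => 0 <= v x <= 1)
    (fun x => [(None, Some x, false, 0%Z); (Some x, None, false, 1%Z)])).
  intros x v. rewrite !Forall_cons_iff. simpl. split; [intros; repeat split; try lra; try constructor; lra|].
  intros [H1 [H2 _]]; lra.
Qed.

Lemma Def_eqc (x : X) (c : Z) : Def (fun v => v x = IZR c).
Proof.
  exists [(Some x, None, false, c); (None, Some x, false, (- c)%Z)].
  intros v. rewrite !Forall_cons_iff. simpl. rewrite opp_IZR.
  split; [intros; repeat split; try lra; try constructor; lra|]. intros [H1 [H2 _]]; lra.
Qed.

Lemma Def_zero_all : Def (fun v => forall x, v x = 0).
Proof.
  apply (Def_all (fun x v => v x = 0)
    (fun x => [(Some x, None, false, 0%Z); (None, Some x, false, 0%Z)])).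
  intros x v. rewrite !Forall_cons_iff. simpl. split; [intros; repeat split; try lra; try constructor; lra|].
  intros [H1 [H2 _]]; lra.
Qed.

Lemma Def_zero_lam (lam : clockset X) : Def (fun v => forall x, lam x = true -> v x = 0).
Proof.
  apply (Def_all (fun x v => lam x = true -> v x = 0)
    (fun x => if lam x then [(Some x, None, false, 0%Z); (None, Some x, false, 0%Z)] else [])).
  intros x v. destruct (lam x).
  - rewrite !Forall_cons_iff. simpl. split; [intros H; specialize (H eq_refl); repeat split; try lra; constructor|].
    intros [H1 [H2 _]] _; lra.
  - split; [constructor|discriminate].
Qed.

Fixpoint gtr (u : X -> nat) (phi : guard X) : list (atom (option X)) :=
  match phi with
  | GTrue => []
  | GLt x k => [(Some x, None, true, (Z.of_nat k - Z.of_nat (u x))%Z)]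
  | GEq x k => [(Some x, None, false, (Z.of_nat k - Z.of_nat (u x))%Z);
                (None, Some x, false, (Z.of_nat (u x) - Z.of_nat k)%Z)]
  | GGt x k => [(None, Some x, true, (Z.of_nat (u x) - Z.of_nat k)%Z)]
  | GAnd g1 g2 => gtr u g1 ++ gtr u g2
  end.

Lemma Def_guard (u : X -> nat) (phi : guard X) : Def (fun v => gsat (vplus u v) phi).
Proof.
  exists (gtr u phi). intros v. induction phi; simpl; unfold vplus;
    rewrite ?Forall_cons_iff; simpl; rewrite ?minus_IZR, <- ?INR_IZR_INZ.
  - split; auto.
  - split; [intros; split; [lra|constructor]|intros [H _]; lra].
  - split; [intros; repeat split; try constructor; lra|intros [H1 [H2 _]]; lra].
  - split; [intros; split; [lra|constructor]|intros [H _]; lra].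
  - rewrite Forall_app. tauto.
Qed.

Lemma ext_upd v x r : ext (upd v x r) = upd (ext v) (Some x) r.
Proof.
  apply functional_extensionality; intros [y|]; unfold ext, upd.
  - destruct (excluded_middle_informative (y = x)), (excluded_middle_informative (Some y = Some x));
      congruence.
  - destruct (excluded_middle_informative (None = Some x)); congruence.
Qed.

Lemma Def_ex (x : X) Z : Def Z -> Def (fun v => exists r, Z (upd v x r)).
Proof.
  intros [cs H]. exists (elim (Some x) cs). intros v. rewrite <- FM.
  split; intros [r Hr]; exists r; [rewrite <- ext_upd; apply H; auto|].
  apply H; rewrite ext_upd; auto.
Qed.

Definition liftA (k : atom (option X)) : atom (option (option X)) :=
  match k with (a, b, s, c) => (Some a, Some b, s, c) end.
Definition hN (n : option (option X)) : option X := match n with None => None | Some o => o end.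
Definition backA (k : atom (option (option X))) : atom (option X) :=
  match k with (a, b, s, c) => (hN a, hN b, s, c) end.

Lemma Forall_pw {T} (P Q : T -> Prop) l : (forall k, P k <-> Q k) -> (Forall P l <-> Forall Q l).
Proof. intros H; rewrite !Forall_forall; split; intros H1 k Hk; apply H; auto. Qed.

Lemma Def_future Z : Def Z -> Def (fun v => exists t, 0 <= t /\ Z (fun x => v x - t)).
Proof.
  intros [cs H].
  exists (map backA (elim (Some None) ((None, Some None, false, 0%Z) :: map liftA cs))).
  intros v. rewrite Forall_map.
  set (G := fun n => ext v (hN n)).
  rewrite (Forall_pw _ (asat G)); [|intros [[[a b] s] c]; simpl; tauto].
  rewrite <- FM.
  assert (Hv : forall t o, upd G (Some None) t (Some o) = ext (fun x => v x - t) o + t).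
  { intros t [y|]; unfold upd, G; simpl.
    - destruct (excluded_middle_informative (Some (Some y) = Some None)); [discriminate|]; simpl; ring.
    - destruct (excluded_middle_informative (Some (@None X) = Some None)); [ring|congruence]. }
  assert (H0 : forall t, upd G (Some None) t None = 0).
  { intros t; unfold upd, G. destruct (excluded_middle_informative (@None (option X) = Some None)); [discriminate|reflexivity]. }
  split.
  - intros [t [Ht HZ]]. exists t. constructor.
    + simpl. rewrite H0, Hv. simpl. lra.
    + apply Forall_map. apply H in HZ. revert HZ. apply Forall_pw.
      intros [[[a b] s] c]; simpl. rewrite !Hv.
      replace (ext (fun x => v x - t) a + t - (ext (fun x => v x - t) b + t))
        with (ext (fun x => v x - t) a - ext (fun x => v x - t) b) by ring. tauto.
  - intros [t Ht]. apply Forall_cons_iff in Ht as [Hk0 Hcs]. exists t. split.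
    + simpl in Hk0. rewrite H0, Hv in Hk0. simpl in Hk0. lra.
    + apply H. rewrite Forall_map in Hcs. revert Hcs. apply Forall_pw.
      intros [[[a b] s] c]; simpl. rewrite !Hv.
      replace (ext (fun x => v x - t) a + t - (ext (fun x => v x - t) b + t))
        with (ext (fun x => v x - t) a - ext (fun x => v x - t) b) by ring. tauto.
Qed.

Definition Qs (Z : (X -> R) -> Prop) (S : list X) (v : X -> R) : Prop :=
  exists w, (forall x, ~ In x S -> w x = v x) /\ Z w.

Lemma Def_Qs Z S : Def Z -> Def (Qs Z S).
Proof.
  intros HZ. induction S as [|x S IH].
  - apply (Def_iff _ _ HZ). intros v; split.
    + intros [w [Hw Zw]]. replace v with w; auto.
      apply functional_extensionality; intros y; apply Hw; auto.
    + intros Zv; exists v; split; auto.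
  - apply (Def_iff _ _ (Def_ex x _ IH)). intros v; split.
    + intros [w [Hw Zw]]. exists (w x). exists w; split; auto.
      intros y Hy. unfold upd. destruct (excluded_middle_informative (y = x)); [congruence|].
      apply Hw. intros [E|E]; auto.
    + intros [r [w [Hw Zw]]]. exists w; split; auto.
      intros y Hy. rewrite Hw by (intros E; apply Hy; right; auto).
      unfold upd. destruct (excluded_middle_informative (y = x)); auto.
      exfalso; apply Hy; left; auto.
Qed.

Lemma Def_reset Z lam : Def Z -> Def (zreset Z lam).
Proof.
  intros HZ.
  apply (Def_iff _ _ (Def_and _ _ (Def_zero_lam lam) (Def_Qs Z (filter lam lx) HZ))).
  intros v; split.
  - intros [v0 [Z0 ->]]. split.
    + intros x Hx; unfold vreset; rewrite Hx; auto.
    + exists v0; split; auto. intros x Hx. unfold vreset.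
      destruct (lam x) eqn:E; auto. exfalso; apply Hx, filter_In; auto.
  - intros [H0 [w [Hw Zw]]]. exists w; split; auto.
    apply functional_extensionality; intros x. unfold vreset.
    destruct (lam x) eqn:E; auto. symmetry; apply Hw. intros Hin.
    apply filter_In in Hin as [_ E']; congruence.
Qed.

Definition IsZ (Z : (X -> R) -> Prop) : Prop := Def Z /\ forall v, Z v -> in_unit_cube v.

Lemma IsZ_future Z : IsZ Z -> IsZ (zfuture Z).
Proof.
  intros [HD _]. split; [|intros v [_ H]; auto].
  apply (Def_iff _ _ (Def_and _ _ (Def_future _ HD) Def_cube)).
  intros v; split.
  - intros [[v0 [t [Z0 [Ht ->]]]] Hc]. split; auto. exists t; split; auto.
    replace (fun x => vdelay v0 t x - t) with v0; auto.
    apply functional_extensionality; intros x; unfold vdelay; ring.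
  - intros [[t [Ht HZ]] Hc]. split; auto. exists (fun x => v x - t), t; repeat split; auto.
    apply functional_extensionality; intros x; unfold vdelay; ring.
Qed.

Lemma IsZ_reset Z lam : IsZ Z -> IsZ (zreset Z lam).
Proof.
  intros [HD HC]. split; [apply Def_reset; auto|].
  intros v [v0 [Z0 ->]] x. unfold vreset. destruct (lam x); [lra|apply HC; auto].
Qed.

Lemma IsZ_inter Z P : IsZ Z -> Def P -> IsZ (fun v => Z v /\ P v).
Proof. intros [HD HC] HP; split; [apply Def_and; auto|intros v [H _]; auto]. Qed.

Lemma IsZ_zero : IsZ (fun v => forall x, v x = 0).
Proof. split; [apply Def_zero_all|]. intros v H x; rewrite H; lra. Qed.

Definition cstZ (c : Z) : option cst :=
  if Z.eqb c 0 then Some C0 else if Z.eqb c 1 then Some Pilot.Defs.C1 else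
  if Z.eqb c (-1) then Some Cm1 else None.
Definition negc (c : cst) : cst := match c with Cm1 => Pilot.Defs.C1 | C0 => C0 | Pilot.Defs.C1 => Cm1 end.

Definition tr (k : atom (option X)) : list (zconstr X) :=
  match k with (a, b, s, c) =>
    match cstZ c with None => [] | Some cc =>
      match a, b with
      | Some x, Some y => [ZDiff x y (if s then CLt else CLe) cc]
      | Some x, None => [ZBound x (if s then CLt else CLe) cc]
      | None, Some y => [ZBound y (if s then CGt else CGe) (negc cc)]
      | None, None => []
      end
    end
  end.

Lemma cstZ_some c cc : cstZ c = Some cc -> IZR c = cst_val cc.
Proof.
  unfold cstZ. destruct (Z.eqb_spec c 0); [intros H; inversion H; subst; reflexivity|].
  destruct (Z.eqb_spec c 1); [intros H; inversion H; subst; reflexivity|].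
  destruct (Z.eqb_spec c (-1)); [intros H; inversion H; subst; reflexivity|]. discriminate.
Qed.
Lemma cstZ_none c : cstZ c = None -> IZR c >= 2 \/ IZR c <= -2.
Proof.
  unfold cstZ. destruct (Z.eqb_spec c 0); [discriminate|].
  destruct (Z.eqb_spec c 1); [discriminate|].
  destruct (Z.eqb_spec c (-1)); [discriminate|]. intros _.
  destruct (Z_le_gt_dec 2 c).
  - left. apply Rle_ge. apply (IZR_le 2 c); auto.
  - right. apply (IZR_le c (-2)). lia.
Qed.

Lemma ext_cube v o : in_unit_cube v -> 0 <= ext v o <= 1.
Proof. intros H; destruct o; simpl; [apply H|lra]. Qed.

Lemma tr_ok v v0 k : in_unit_cube v -> in_unit_cube v0 -> asat (ext v0) k ->
  (asat (ext v) k <-> Forall (zsat v) (tr k)).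
Proof.
  intros Hv Hv0 Hk. destruct k as [[[a b] s] c]. unfold tr.
  destruct (cstZ c) as [cc|] eqn:E.
  - apply cstZ_some in E.
    destruct a as [x|], b as [y|]; simpl in *; rewrite ?Forall_cons_iff; simpl;
      rewrite E in *; destruct s; simpl.
    all: assert (Hn : cst_val (negc cc) = - cst_val cc) by (destruct cc; simpl; lra).
    all: try rewrite Hn.
    all: first [ split; [intros; split; [lra|constructor]|intros [? ?]; lra]
               | split; [intros; constructor|intros; lra] ].
  - apply cstZ_none in E. split; [constructor|intros _].
    pose proof (ext_cube v a Hv); pose proof (ext_cube v b Hv);
    pose proof (ext_cube v0 a Hv0); pose proof (ext_cube v0 b Hv0).
    simpl in *; destruct s; lra.
Qed.

Lemma to_zone1 Z : IsZ Z -> (exists v0, Z v0) -> zone1 Z.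
Proof.
  intros [[cs HD] HC] [v0 Z0].
  exists (flat_map tr cs). intros v.
  assert (Hk : Forall (asat (ext v0)) cs) by (apply HD; auto).
  assert (Key : in_unit_cube v -> (Forall (asat (ext v)) cs <-> Forall (zsat v) (flat_map tr cs))).
  { intros Hv. clear HD. induction cs as [|k cs IH]; simpl; [split; constructor|].
    apply Forall_cons_iff in Hk as [Hk1 Hk2].
    rewrite Forall_cons_iff, Forall_app, (tr_ok v v0 k Hv (HC v0 Z0) Hk1), IH; auto; tauto. }
  split.
  - intros Zv. pose proof (HC v Zv). split; auto. apply Key; auto. apply HD; auto.
  - intros [Hv Hz]. apply HD. apply Key; auto.
Qed.

End Zones.
Arguments IsZ {X}. Arguments Def {X}. Arguments ext {X}.


Section Runs.
Variables L X : Type.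
Variable lx : list X.
Hypothesis Hlx : forall x : X, In x lx.
Variable A : TA L X.

Lemma rrun_app q1 w1 q2 w2 q3 : rrun A q1 w1 q2 -> rrun A q2 w2 q3 -> rrun A q1 (w1 ++ w2) q3.
Proof.
  intros H1 H2; induction H1 as [q|q1 a q2' w q3' Hs Hr IH]; simpl; auto.
  specialize (IH H2). replace ((match a with None => w | Some x => x :: w end) ++ w2)
    with (match a with None => w ++ w2 | Some x => x :: (w ++ w2) end) by (destruct a; auto).
  eapply rrun_cons; eauto.
Qed.

Lemma bound_exists (f : X -> R) : exists B : nat, forall x, f x <= INR B.
Proof.
  assert (H : forall l : list X, exists B : nat, forall x, In x l -> f x <= INR B).
  { induction l as [|y l [B HB]]; [exists 0%nat; intros ? []|].
    destruct (INR_unbounded (f y)) as [n Hn].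
    exists (Nat.max B n). intros x [<-|Hx].
    - apply Rle_trans with (INR n); [lra|apply le_INR; lia].
    - apply Rle_trans with (INR B); [auto|apply le_INR; lia]. }
  destruct (H lx) as [B HB]; exists B; auto.
Qed.

Lemma max_exists (x0 : X) (v : X -> R) : exists xm, forall y, v y <= v xm.
Proof.
  assert (H : forall l : list X, exists xm, forall y, In y (x0 :: l) -> v y <= v xm).
  { induction l as [|y l [m Hm]]; [exists x0; intros ? [<-|[]]; lra|].
    destruct (Rle_dec (v y) (v m)).
    - exists m. intros z Hz. destruct Hz as [E|[E|Hz]]; subst; auto; apply Hm; [left|right]; auto.
    - exists y. intros z Hz. destruct Hz as [E|[E|Hz]]; subst.
      + specialize (Hm z (or_introl eq_refl)); lra.
      + lra.
      + specialize (Hm z (or_intror Hz)); lra. }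
  destruct (H lx) as [m Hm]; exists m; intros y; apply Hm; right; auto.
Qed.

Fixpoint msum (B : nat) (u : X -> nat) (l : list X) : nat :=
  match l with [] => 0%nat | y :: l => ((B - u y) + msum B u l)%nat end.

Lemma msum_incr B u x l : (u x < B)%nat ->
  (msum B (incr u x) l <= msum B u l)%nat /\ (In x l -> (msum B (incr u x) l < msum B u l)%nat).
Proof.
  intros Hb. induction l as [|y l [IH1 IH2]]; simpl; [split; [lia|intros []]|].
  unfold incr at 1 3. destruct (excluded_middle_informative (y = x)).
  - subst. split; [lia|intros _; lia].
  - split; [lia|intros [E|Hin]; [congruence|specialize (IH2 Hin); lia]].
Qed.

Lemma wrap_pt (nc : X -> R) (u : X -> nat) (Z : (X -> R) -> Prop) (x : X) :
  Z (fun y => nc y - INR (u y)) -> nc x - INR (u x) = 1 ->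
  zreset (fun v => Z v /\ v x = 1) (single x) (fun y => nc y - INR (incr u x y)).
Proof.
  intros HZ Hx. exists (fun y => nc y - INR (u y)); split; [split; auto|].
  apply functional_extensionality; intros y. unfold vreset, single, incr.
  destruct (excluded_middle_informative (y = x)); [subst; rewrite S_INR; lra|auto].
Qed.

Lemma delay_sim (B : nat) : forall n (l : L) (u : X -> nat) Z g (nc : X -> R) (d : R),
  (msum B u lx < n)%nat -> IsZ Z -> Z (fun x => nc x - INR (u x)) -> 0 <= d ->
  (forall x, nc x + d <= INR B) ->
  exists w u' Z', IsZ Z' /\ rrun A (mkR l u Z g) w (mkR l u' Z' g) /\
     Z' (fun x => nc x + d - INR (u' x)).
Proof.
  induction n as [|n IH]; intros l u Z g nc d Hn HZ Zv Hd HB; [lia|].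
  set (v := fun x => nc x - INR (u x)) in *.
  assert (Hc : in_unit_cube v) by (apply HZ; auto).
  destruct (classic (exists x0 : X, True)) as [[x0 _]|Hne].
  2:{ assert (Hz : zfuture Z (fun x => nc x + d - INR (u x))).
      { split; [exists v, d; repeat split; auto|intros x; exfalso; eauto].
        apply functional_extensionality; intros x; unfold vdelay, v; ring. }
      exists [], u, (zfuture Z). split; [apply (IsZ_future _ lx Hlx); auto|]. split; auto.
      change (@nil X) with (match @None X with None => @nil X | Some x => [x] end).
      eapply rrun_cons; [|apply rrun_nil]. apply r_delay.
      apply to_zone1; auto; [apply (IsZ_future _ lx Hlx); auto|eauto]. }
  destruct (max_exists x0 v) as [xm Hm].
  assert (Hxm : v xm <= 1) by apply Hc.
  destruct (Req_dec (v xm) 1) as [E1|E1].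
  -
    pose proof (wrap_pt nc u Z xm Zv E1) as Hw.
    assert (HZ1 : IsZ (zreset (fun w => Z w /\ w xm = 1) (single xm))).
    { apply (IsZ_reset _ lx Hlx), IsZ_inter; auto. apply (Def_eqc _ xm 1). }
    assert (Hub : (u xm < B)%nat).
    { assert (INR (S (u xm)) <= INR B) by (rewrite S_INR; specialize (HB xm); unfold v in E1; lra).
      apply INR_le in H; lia. }
    destruct (msum_incr B u xm lx Hub) as [_ Hlt].
    destruct (IH l (incr u xm) (zreset (fun w => Z w /\ w xm = 1) (single xm)) g nc d) as [w [u' [Z' [HZ' [Hr HZ'v]]]]]; auto.
    { specialize (Hlt (Hlx xm)); lia. }
    exists (match (if g xm then None else Some xm) with None => w | Some x => x :: w end), u', Z'.
    split; auto. split; auto.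
    eapply rrun_cons; [|apply Hr]. apply r_wrap.
    apply to_zone1; eauto.
  - assert (Hlt1 : v xm < 1) by lra.
    destruct (Rle_dec d (1 - v xm)) as [Hle|Hgt].
    + assert (Hz : zfuture Z (fun x => nc x + d - INR (u x))).
      { split; [exists v, d; repeat split; auto|].
        - apply functional_extensionality; intros x; unfold vdelay, v; ring.
        - intros x. specialize (Hc x); specialize (Hm x). unfold v in *; lra. }
      exists [], u, (zfuture Z). split; [apply (IsZ_future _ lx Hlx); auto|]. split; auto.
      change (@nil X) with (match @None X with None => @nil X | Some x => [x] end).
      eapply rrun_cons; [|apply rrun_nil]. apply r_delay.
      apply to_zone1; auto; [apply (IsZ_future _ lx Hlx); auto|eauto].
    + set (dl := 1 - v xm).
      set (nc' := fun x => nc x + dl).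
      assert (Hz : zfuture Z (fun x => nc' x - INR (u x))).
      { split; [exists v, dl; repeat split; auto; try (unfold dl; lra)|].
        - apply functional_extensionality; intros x; unfold vdelay, v, nc'; ring.
        - intros x. specialize (Hc x); specialize (Hm x). unfold nc', dl, v in *; lra. }
      assert (HZf : IsZ (zfuture Z)) by (apply (IsZ_future _ lx Hlx); auto).
      assert (E2 : nc' xm - INR (u xm) = 1) by (unfold nc', dl, v; ring).
      pose proof (wrap_pt nc' u _ xm Hz E2) as Hw.
      assert (HZ1 : IsZ (zreset (fun w => zfuture Z w /\ w xm = 1) (single xm))).
      { apply (IsZ_reset _ lx Hlx), IsZ_inter; auto. apply (Def_eqc _ xm 1). }
      assert (Hub : (u xm < B)%nat).
      { assert (INR (S (u xm)) <= INR B).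
        { rewrite S_INR; specialize (HB xm). unfold nc', dl, v in *; lra. }
        apply INR_le in H; lia. }
      destruct (msum_incr B u xm lx Hub) as [_ Hlt].
      destruct (IH l (incr u xm) (zreset (fun w => zfuture Z w /\ w xm = 1) (single xm)) g nc' (d - dl)) as [w [u' [Z' [HZ' [Hr HZ'v]]]]]; auto.
      { specialize (Hlt (Hlx xm)); lia. }
      { unfold dl; lra. }
      { intros x; unfold nc'; specialize (HB x); lra. }
      exists (match (if g xm then None else Some xm) with None => w | Some x => x :: w end), u', Z'.
      split; auto. split.
      * refine (@rrun_cons _ _ A _ None _ _ _ _ _); [apply r_delay; apply to_zone1; eauto|].
        eapply rrun_cons; [|apply Hr]. apply r_wrap. apply to_zone1; eauto.
      * replace (fun x => nc x + d - INR (u' x)) with (fun x => nc' x + (d - dl) - INR (u' x)); auto.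
        apply functional_extensionality; intros x; unfold nc'; ring.
Qed.


Lemma fwd : forall c1 c3 rs, ta_run A c1 c3 rs ->
  forall u Z g, IsZ Z -> Z (fun x => snd c1 x - INR (u x)) ->
  (forall x, rs x = true -> g x = true) ->
  exists w u' Z' g', IsZ Z' /\ (forall x, g' x = g x && negb (rs x)) /\
    rrun A (mkR (fst c1) u Z g) w (mkR (fst c3) u' Z' g') /\
    Z' (fun x => snd c3 x - INR (u' x)).
Proof.
  intros c1 c3 rs H. induction H as [c|c1 c2 c3 lab rs Hs Hr IH];
    intros u Z g HZ Zv Hg.
  - exists [], u, Z, g. split; auto. split; [intros; rewrite andb_true_r; auto|].
    split; [apply rrun_nil|auto].
  - inversion Hs as [l v d Hd E1 E2 E3|l phi lam l' v Hin Hphi E1 E2 E3]; subst; simpl in *.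
    + destruct (bound_exists (fun x => v x + d)) as [B HB].
      destruct (delay_sim B (S (msum B u lx)) l u Z g v d) as [w1 [u1 [Z1 [HZ1 [Hr1 HZ1v]]]]]; auto.
      destruct (IH u1 Z1 g HZ1) as [w2 [u2 [Z2 [g2 [HZ2 [Hg2 [Hr2 HZ2v]]]]]]]; auto.
      exists (w1 ++ w2), u2, Z2, g2. split; auto. split; auto.
      split; auto. eapply rrun_app; eauto.
    + set (Z1 := zreset (fun w => Z w /\ gsat (vplus u w) phi) lam).
      set (g1 := fun x => g x && (negb (lam x) || rs x)).
      assert (Hpt : Z1 (fun x => vreset v lam x - INR (nreset u lam x))).
      { exists (fun x => v x - INR (u x)). split.
        - split; auto. replace (vplus u (fun x => v x - INR (u x))) with v; auto.
          apply functional_extensionality; intros x; unfold vplus; ring.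
        - apply functional_extensionality; intros x; unfold vreset, nreset.
          destruct (lam x); simpl; ring. }
      assert (HZ1 : IsZ Z1).
      { apply (IsZ_reset _ lx Hlx), IsZ_inter; auto. apply Def_guard. }
      destruct (IH (nreset u lam) Z1 g1 HZ1 Hpt) as [w2 [u2 [Z2 [g2 [HZ2 [Hg2 [Hr2 HZ2v]]]]]]].
      { intros x Hx. unfold g1. rewrite Hg by (rewrite Hx, orb_true_r; auto).
        rewrite Hx, orb_true_r; auto. }
      exists w2, u2, Z2, g2. split; auto. split.
      { intros x. rewrite Hg2. unfold g1. destruct (g x), (lam x), (rs x); auto. }
      split; auto.
      refine (@rrun_cons _ _ A _ None _ _ _ _ Hr2).
      apply r_edge; auto.
      * intros x. unfold g1. specialize (Hg x). destruct (g x), (lam x), (rs x); simpl in *; auto.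
      * apply to_zone1; eauto.
Qed.

Lemma bwd : forall q1 w q3, rrun A q1 w q3 -> forall v3, rzone q3 v3 ->
  exists v1, rzone q1 v1 /\ exists rs,
    ta_run A (rloc q1, vplus (rint q1) v1) (rloc q3, vplus (rint q3) v3) rs /\
    forall x, rgam q1 x = rs x || rgam q3 x.
Proof.
  intros q1 w q3 H. induction H as [q|q1 a q2 w q3 Hs Hr IH]; intros v3 H3.
  - exists v3; split; auto. exists (fun _ => false). split; [apply ta_run_nil|auto].
  - destruct (IH v3 H3) as [v2 [H2 [rs [Hrun Hg]]]]. clear IH.
    revert v2 H2 rs Hrun Hg. destruct Hs; simpl; intros v2 H2 rs Hrun Hg.
    + destruct H2 as [[v0 [t [Z0 [Ht ->]]]] _].
      exists v0; split; auto. eexists; split.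
      * eapply ta_run_cons; [apply ta_delay; exact Ht|].
        replace (vdelay (vplus u v0) t) with (vplus u (vdelay v0 t)); [exact Hrun|].
        apply functional_extensionality; intros x; unfold vplus, vdelay; ring.
      * simpl; auto.
    + destruct H2 as [v0 [[Z0 Hx] ->]].
      exists v0; split; auto. exists rs; split; auto.
      replace (vplus u v0) with (vplus (incr u x) (vreset v0 (single x))); [exact Hrun|].
      apply functional_extensionality; intros y; unfold vplus, vreset, single, incr.
      destruct (excluded_middle_informative (y = x)); [subst; rewrite S_INR; lra|auto].
    + destruct H2 as [v0 [[Z0 Hphi] ->]].
      exists v0; split; auto. eexists; split.
      * eapply ta_run_cons; [eapply ta_discrete; eauto|].
        replace (vreset (vplus u v0) lam) with (vplus (nreset u lam) (vreset v0 lam)); [exact Hrun|].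
        apply functional_extensionality; intros y; unfold vplus, vreset, nreset.
        destruct (lam y); simpl; ring.
      * simpl. intros x. rewrite H0, Hg. destruct (g' x), (lam x), (rs x), (rgam q3 x); auto.
Qed.

End Runs.

Theorem proposition3 (L X : Type) (HL : finite_type L) (HX : finite_type X)
  (A : TA L X) (l0 l : L) (nu : X -> R) (Hnu : forall x, 0 <= nu x)
  (gamma : clockset X) :
  (exists rs : clockset X,
      ta_run A (l0, val0) (l, nu) rs /\ (forall x, rs x = gamma x))
  <->
  (exists (w : list X) (u : X -> nat) (Z : (X -> R) -> Prop) (g : clockset X),
      zone1 Z /\ (forall x, g x = false) /\
      rrun A (mkR l0 (fun _ => 0%nat) (fun v => forall x, v x = 0) gamma) w
             (mkR l u Z g) /\
      Z (fun x => nu x - INR (u x))).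
Proof.
  destruct HX as [lx Hlx]. split.
  - intros [rs [Hr Hrs]].
    destruct (fwd L X lx Hlx A _ _ _ Hr (fun _ => 0%nat) (fun v => forall x, v x = 0) gamma)
      as [w [u' [Z' [g' [HZ' [Hg' [Hr' HZ'v]]]]]]].
    + apply (IsZ_zero _ lx Hlx).
    + intros x; simpl; unfold val0; simpl; ring.
    + intros x Hx; rewrite <- Hrs; auto.
    + exists w, u', Z', g'. split; [apply to_zone1; eauto|].
      split; [intros x; rewrite Hg', Hrs; destruct (gamma x); auto|].
      split; auto.
  - intros [w [u [Z [g [HZ [Hg [Hr HZv]]]]]]].
    destruct (bwd L X A _ _ _ Hr _ HZv) as [v1 [H1 [rs [Hrun Hgam]]]].
    simpl in *. exists rs. split.
    + replace (vplus (fun _ => 0%nat) v1) with (@val0 X) in Hrun.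
      2:{ apply functional_extensionality; intros x; unfold vplus, val0; rewrite H1; simpl; ring. }
      replace (vplus u (fun x => nu x - INR (u x))) with nu in Hrun; auto.
      apply functional_extensionality; intros x; unfold vplus; ring.
    + intros x. rewrite Hgam, Hg. destruct (rs x); auto.
Qed.
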